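(* Let $s\ge 3$ and let $\lambda$ be an $(s,s+1,s+2)$-core partition of maximum size among all $(s,s+1,s+2)$-core partitions. If $\beta(\lambda)$ contains an element $i\in B_k$ (for some $0\le k\le \lfloor s/2\rfloor-1$), then $\beta(\lambda)$ contains every integer in $\{i,i+1,\ldots,(k+1)s-1\}$.
   Context: The $\beta$-set $\beta(\lambda)$ of a partition is the set of hook lengths of the boxes in its first column. An $(s,s+1,s+2)$-core is a partition with no hook length divisible by $s$, $s+1$ or $s+2$. For $s\ge 3$ and $0\le k\le\lfloor s/2\rfloor-1$, $B_k=\{1+k(s+2),\ldots,(k+1)s-1\}$; these sets partition the set $T_s$ of positive integers not expressible as $k_1s+k_2(s+1)+k_3(s+2)$ with $k_i\in\mathbb{N}$, and $\beta$-sets of $(s,s+1,s+2)$-cores are exactly the order ideals of $T_s$ under the order generated by $y>y-a$ for $y,y-a\in T_s$, $a\in\{s,s+1,s+2\}$. *)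

(* Defs.v *)
From mathcomp Require Import all_boot.
Set Implicit Arguments. Unset Strict Implicit. Unset Printing Implicit Defensive.

Definition is_partition (la : seq nat) : bool :=
  sorted geq la && all (fun x => 0 < x) la.

Definition psize (la : seq nat) : nat := sumn la.

(* length of column j (0-indexed) = number of parts > j *)
Definition conj_part (la : seq nat) (j : nat) : nat := count (fun x => j < x) la.

Definition is_box (la : seq nat) (i j : nat) : bool :=
  (i < size la) && (j < nth 0 la i).

(* hook length of box (i,j): arm + leg + 1 *)
Definition hook (la : seq nat) (i j : nat) : nat :=
  (nth 0 la i - j.+1) + (conj_part la j - i.+1) + 1.

Definition is_core3 (s : nat) (la : seq nat) : Prop :=
  is_partition la /\
  forall i j, is_box la i j ->
    ~~ (s %| hook la i j) /\ ~~ (s.+1 %| hook la i j) /\ ~~ (s.+2 %| hook la i j).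

Definition beta (la : seq nat) : seq nat :=
  [seq hook la i 0 | i <- iota 0 (size la)].

(* Main.v *)
Require Import Defs.
From mathcomp Require Import all_boot zify.
Set Implicit Arguments. Unset Strict Implicit. Unset Printing Implicit Defensive.

Lemma prefix_count (g : nat -> nat) (n v : nat) :
  (forall t t', t <= t' -> t' < n -> g t' <= g t) ->
  forall t, t < n -> (t < count (fun u => v < g u) (iota 0 n)) = (v < g t).
Proof.
elim: n => [|n IH] Hg t Ht //.
rewrite -[n.+1]addn1 iotaD /= count_cat /= add0n addn0.
have Hg' : forall t t', t <= t' -> t' < n -> g t' <= g t.
  by move=> a b Hab Hb; apply: Hg => //; lia.
have Hc := count_size (fun u => v < g u) (iota 0 n); rewrite size_iota in Hc.
case: (ltnP v (g n)) => Hvn /=.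
- have Hall : count (fun u => v < g u) (iota 0 n) = n.
    apply/eqP; rewrite -[X in _ == X](size_iota 0 n) -all_count; apply/allP => u.
    rewrite mem_iota => /andP [_ Hu]. apply: leq_trans Hvn _; apply: Hg; lia.
  rewrite Hall addn1 ltnS.
  have -> : t <= n by lia.
  symmetry; apply: leq_trans Hvn _; apply: Hg; lia.
- rewrite addn0. case: (ltnP t n) => Htn.
  + exact: IH.
  + have Etn : t = n by lia.
    subst t. rewrite ltnNge Hc /=. apply/esym/negbTE; rewrite -leqNgt //.
Qed.

Lemma part_mono la : is_partition la ->
  forall t t', t <= t' -> t' < size la -> nth 0 la t' <= nth 0 la t.
Proof.
case/andP => Hs _ t t' Htt' Ht'.
have Htr : transitive geq by move=> a b c H1 H2; apply: leq_trans H2 H1.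
have := @sorted_leq_nth _ geq Htr (fun a => leqnn a) 0 la Hs t t'.
rewrite !inE => H; apply: H => //; lia.
Qed.

Lemma part_pos la : is_partition la -> forall t, t < size la -> 0 < nth 0 la t.
Proof. case/andP => _ /allP Ha t Ht; exact: Ha _ (mem_nth 0 Ht). Qed.

Lemma conj_nth la j : conj_part la j = count (fun u => j < nth 0 la u) (iota 0 (size la)).
Proof. by rewrite /conj_part -{1}(mkseq_nth 0 la) /mkseq count_map. Qed.

Lemma conj_prefix la j : is_partition la -> forall t, t < size la ->
  (t < conj_part la j) = (j < nth 0 la t).
Proof. move=> Hp t Ht; rewrite conj_nth; apply: prefix_count => //; exact: part_mono. Qed.

Lemma conj_le la j : conj_part la j <= size la.
Proof. exact: count_size. Qed.

Lemma conj0 la : is_partition la -> conj_part la 0 = size la.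
Proof. case/andP => _ Ha; apply/eqP; rewrite -all_count; exact: Ha. Qed.

Definition xb la t := nth 0 la t + (size la - t.+1).

Lemma hook0 la t : is_partition la -> t < size la -> hook la t 0 = xb la t.
Proof.
move=> Hp Ht; rewrite /hook /xb conj0 //; have := part_pos Hp Ht; lia.
Qed.

Lemma beta_xb la : is_partition la -> beta la = map (xb la) (iota 0 (size la)).
Proof.
move=> Hp; rewrite /beta; apply/eq_in_map => t; rewrite mem_iota => /andP [_ Ht].
by apply: hook0.
Qed.

Lemma mem_betaP la y : is_partition la ->
  reflect (exists2 t, t < size la & xb la t = y) (y \in beta la).
Proof.
move=> Hp; rewrite beta_xb //; apply: (iffP mapP).
- by case=> t; rewrite mem_iota => /andP [_ Ht] ->; exists t.
- by case=> t Ht <-; exists t => //; rewrite mem_iota.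
Qed.

Lemma xb_mono la : is_partition la -> forall t t', t <= t' -> t' < size la -> xb la t' <= xb la t.
Proof. move=> Hp t t' H1 H2; rewrite /xb; have := part_mono Hp H1 H2; lia. Qed.

Lemma hook_repr la r j : is_partition la -> r < size la -> j < nth 0 la r ->
  [/\ hook la r j = xb la r - (j + (size la - conj_part la j)),
      j + (size la - conj_part la j) < xb la r &
      (j + (size la - conj_part la j)) \notin beta la].
Proof.
move=> Hp Hr Hj.
have Hcl := conj_le la j.
have Hc := conj_prefix j Hp.
have Hrc : r < conj_part la j by rewrite Hc.
split.
- rewrite /hook /xb; lia.
- rewrite /xb; lia.
- apply/(mem_betaP _ Hp) => [[t Ht]]; rewrite /xb.
  case: (ltnP t (conj_part la j)) => Htc.
  + have : j < nth 0 la t by rewrite -Hc.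
    lia.
  + have : ~~ (j < nth 0 la t) by rewrite -Hc // -leqNgt.
    rewrite -leqNgt. lia.
Qed.

Lemma hook_exists la r y : is_partition la -> r < size la -> y < xb la r ->
  y \notin beta la -> exists2 j, j < nth 0 la r & hook la r j = xb la r - y.
Proof.
move=> Hp Hr Hy Hyb.
set n := size la.
set c := count (fun u => y < xb la u) (iota 0 n).
have Hc : forall t, t < n -> (t < c) = (y < xb la t).
  by apply: prefix_count; exact: xb_mono.
have Hcn : c <= n by have := count_size (fun u => y < xb la u) (iota 0 n); rewrite size_iota.
have Hrc : r < c by rewrite Hc.
have Hneq : forall t, t < n -> xb la t != y.
  by move=> t Ht; apply/eqP => E; move/negP: Hyb; apply; apply/(mem_betaP _ Hp); exists t.
have Hbelow : c < n -> xb la c < y.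
  move=> Hcn'; have := Hneq c Hcn'; have : ~~ (c < c) by rewrite ltnn.
  rewrite Hc // -leqNgt; lia.
have Hlow : n <= y + c.
  case: (ltnP c n) => Hcn'; last lia.
  have := Hbelow Hcn'; have := part_pos Hp Hcn'; rewrite /xb; lia.
set j := y + c - n.
have Hcj : forall t, t < n -> (j < nth 0 la t) = (t < c).
  move=> t Ht; case: (ltnP t c) => Htc.
  + have Hc1 : c.-1 < n by lia.
    have := Hc c.-1 Hc1; have -> : c.-1 < c by lia.
    rewrite /xb => /esym H1.
    have := part_mono Hp (_ : t <= c.-1) Hc1.
    move=> H2; have {}H2 := H2 ltac:(lia). idtac. lia.
  + have Hcn' : c < n by lia.
    have := Hbelow Hcn'; rewrite /xb => H1.
    have := part_mono Hp Htc Ht. move=> H2. apply/negbTE; rewrite -leqNgt. lia.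
have Hconj : conj_part la j = c.
  have Hcl := conj_le la j.
  have Hcp := conj_prefix j Hp.
  case: (ltngtP (conj_part la j) c) => // H.
  + have Hn : conj_part la j < n by lia.
    have := Hcp _ Hn; rewrite ltnn Hcj // H //.
  + have Hn : c < n by lia.
    have := Hcp _ Hn; rewrite H Hcj // ltnn //.
exists j.
- by rewrite Hcj.
- have := Hcj r Hr; rewrite Hrc => Hjr. rewrite /hook /xb Hconj /j in Hjr *; lia.
Qed.

Definition PP (s : nat) (X : seq nat) := forall x a, x \in X -> a \in [:: s; s.+1; s.+2] ->
  x != a /\ (a < x -> x - a \in X).

Lemma PP_eqi s X Y : X =i Y -> PP s X -> PP s Y.
Proof. move=> E H x a; rewrite -!E; exact: H. Qed.

Lemma chain s X x y a : PP s X -> x \in X -> y \notin X -> y < x ->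
  a \in [:: s; s.+1; s.+2] -> ~~ (a %| x - y).
Proof.
move=> HP Hx Hy Hyx Ha; apply/negP => /dvdnP [t Ht].
elim: t x Hx Hyx Ht => [|t IH] x Hx Hyx Ht; first lia.
have [Hne Hlt] := HP x a Hx Ha.
have Hax : a < x by move: Hne Ht; rewrite mulSn; lia.
have Hxa := Hlt Hax.
case: t IH Ht => [|t] IH Ht.
- have E : x - a = y by move: Ht; rewrite mul1n; lia.
  by move/negP: Hy; apply; rewrite -E.
- apply: (IH (x - a)) => //; move: Ht; rewrite mulSn; lia.
Qed.

Lemma core_PP s la : 0 < s -> is_core3 s la -> PP s (beta la).
Proof.
move=> Hs0 [Hp Hc] x a Hx Ha.
have Ha0 : 0 < a by move: Ha; rewrite !inE => /or3P [] /eqP ->.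
case/(mem_betaP _ Hp): Hx => r Hr Exr.
have Hbox0 : is_box la r 0 by rewrite /is_box Hr /= part_pos.
have Hdiv : forall j, is_box la r j -> ~~ (a %| hook la r j).
  move=> j Hb; have [H1 [H2 H3]] := Hc r j Hb.
  by move: Ha; rewrite !inE => /or3P [] /eqP ->.
split.
- apply/negP => /eqP E; have := Hdiv 0 Hbox0; rewrite hook0 // Exr E dvdnn.
  done.
- move=> Hax; apply/negPn/negP => Hn.
  have Hlt' : x - a < xb la r by rewrite Exr; lia.
  have [j Hj Hh] := hook_exists Hp Hr Hlt' Hn.
  have Hb : is_box la r j by rewrite /is_box Hr.
  have := Hdiv j Hb; rewrite Hh Exr (_ : x - (x - a) = a) ?dvdnn //; lia.
Qed.

Lemma PP_core s la : is_partition la -> PP s (beta la) -> is_core3 s la.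
Proof.
move=> Hp HP; split => // r j /andP [Hr Hj].
have [Hh Hlt Hn] := hook_repr Hp Hr Hj.
have Hx : xb la r \in beta la by apply/(mem_betaP _ Hp); exists r.
rewrite Hh; split; [|split]; apply: (chain HP Hx Hn Hlt); rewrite !inE eqxx ?orbT //.
Qed.

Lemma sumn_mapD (f g : nat -> nat) s :
  sumn (map (fun t => f t + g t) s) = sumn (map f s) + sumn (map g s).
Proof. by elim: s => //= x s ->; lia. Qed.

Lemma sum_beta la : is_partition la ->
  sumn (beta la) = psize la + sumn (map (fun t => size la - t.+1) (iota 0 (size la))).
Proof.
move=> Hp; rewrite beta_xb // /xb sumn_mapD /psize.
congr (_ + _); by rewrite -{3}(mkseq_nth 0 la).
Qed.

Fixpoint mkpart (xs : seq nat) : seq nat :=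
  if xs is x :: xs' then (x - size xs') :: mkpart xs' else [::].

Lemma mkpart_size xs : size (mkpart xs) = size xs.
Proof. by elim: xs => //= x xs ->. Qed.

Lemma mkpart_nth xs t : t < size xs -> nth 0 (mkpart xs) t = nth 0 xs t - (size xs - t.+1).
Proof.
elim: xs t => [|x xs IH] [|t] //= Ht.
- congr (_ - _); lia.
- rewrite IH //.
Qed.

Lemma gtn_size x xs : sorted gtn (x :: xs) -> all (fun z => 0 < z) (x :: xs) -> size xs < x.
Proof.
elim: xs x => [|y xs IH] x /=; first by move=> _ /andP [].
case/andP => Hxy Hs /andP [Hx Hall].
have := IH y Hs Hall. move: Hxy => /= Hxy. lia.
Qed.

Lemma mkpart_part xs : sorted gtn xs -> all (fun z => 0 < z) xs -> is_partition (mkpart xs).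
Proof.
rewrite /is_partition.
elim: xs => [|x xs IH] //= Hs /andP [Hx Hall].
have Hs' : sorted gtn xs by move: Hs; case: xs {IH Hall} => //= y xs /andP [].
have /andP [IH1 IH2] := IH Hs' Hall.
have Hsz := gtn_size Hs (_ : all _ (x :: xs)); rewrite /= Hx Hall in Hsz.
have {}Hsz := Hsz erefl.
apply/andP; split; last first.
- rewrite IH2 andbT; lia.
- move: Hs IH1; case: xs {IH Hall Hs' Hsz IH2} => //= y xs /andP [Hxy _] ->.
  rewrite andbT /=; lia.
Qed.

Lemma beta_mkpart xs : sorted gtn xs -> all (fun z => 0 < z) xs -> beta (mkpart xs) = xs.
Proof.
move=> Hs Ha; have Hp := mkpart_part Hs Ha.
rewrite beta_xb // mkpart_size; transitivity (mkseq (nth 0 xs) (size xs)); last exact: mkseq_nth. rewrite /mkseq.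
apply/eq_in_map => t; rewrite mem_iota => /andP [_ Ht].
rewrite /xb mkpart_size mkpart_nth //.
have := part_pos Hp (_ : t < size (mkpart xs)); rewrite mkpart_size mkpart_nth // => H.
have {}H := H Ht; lia.
Qed.

Definition rk s (X : seq nat) x := count (fun z => (z %/ s == x %/ s) && (x <= z)) X.
Definition phi s X x := (x %/ s).+1 * s - rk s X x.

Lemma lev_eq s k z : 0 < s -> k * s <= z -> z < k.+1 * s -> z %/ s = k.
Proof. move=> Hs H1 H2; apply/eqP; rewrite eqn_leq -ltnS ltn_divLR // H2 leq_divRL // H1. Qed.

Lemma notrep s X : PP s X -> forall q x, q.+1 * s <= x -> x <= q.+1 * s.+2 -> x \in X -> False.
Proof.
move=> HP; elim=> [|q IH] x H1 H2 Hx.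
- have Ha : x \in [:: s; s.+1; s.+2] by rewrite !inE; lia.
  have [Hne _] := HP x x Hx Ha. by rewrite eqxx in Hne.
- have E1 : q.+2 * s = s + q.+1 * s by rewrite mulSn.
  have E2 : q.+1 * s.+2 = q.+1 * s + 2 * q.+1 by rewrite !mulnS; lia.
  have E3 : q.+2 * s.+2 = q.+2 * s + 2 * q.+2 by rewrite !mulnS; lia.
  case: (leqP (x - s) (q.+1 * s.+2)) => Hc.
  + have Hin : s \in [:: s; s.+1; s.+2] by rewrite inE eqxx.
    have [Hne Hlt] := HP x s Hx Hin.
    apply: (IH (x - s)); [lia | lia | apply: Hlt; lia].
  + have Hin : s.+2 \in [:: s; s.+1; s.+2] by rewrite !inE eqxx !orbT.
    have [Hne Hlt] := HP x s.+2 Hx Hin.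
    apply: (IH (x - s.+2)); [lia | lia | apply: Hlt; lia].
Qed.

Lemma inB s X x : 0 < s -> PP s X -> (forall z, z \in X -> 0 < z) -> x \in X ->
  x %/ s * s.+2 < x.
Proof.
move=> Hs HP Hpos Hx.
have E := divn_eq x s; have Hr := ltn_pmod x Hs.
case: (ltnP (x %/ s * s.+2) x) => // Hle; exfalso.
move: E Hle; case: (x %/ s) => [|q] E Hle.
- have := Hpos x Hx; lia.
- apply: (notrep HP (q := q) (x := x)) => //; lia.
Qed.

Lemma count_strict (T : eqType) (p q : pred T) (X : seq T) w :
  (forall z, p z -> q z) -> w \in X -> q w -> ~~ p w -> count p X < count q X.
Proof.
move=> Hpq; elim: X => //= z X IH; rewrite inE => /orP [/eqP <- | Hw] Hq Hp.
- rewrite Hq (negbTE Hp) /=. have := @sub_count _ p q Hpq X. lia.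
- have := IH Hw Hq Hp. case Pz: (p z); first (have -> := Hpq z Pz); case: (q z); lia.
Qed.

Lemma exists_max (p : pred nat) (X : seq nat) x : x \in X -> p x ->
  exists m, [/\ m \in X, p m, x <= m & forall z, z \in X -> p z -> z <= m].
Proof.
elim: X x => // y X IH x; rewrite inE => /orP [/eqP -> | Hx] Hp.
- case: (boolP (has (fun z => p z && (y < z)) X)) => [/hasP [z Hz /andP [Pz Hyz]] | Hn].
  + have [m [Hm Pm Hzm Hall]] := IH z Hz Pz.
    exists m; split => //; first by rewrite inE Hm orbT.
    * lia.
    * move=> w; rewrite inE => /orP [/eqP -> | Hw] Pw //; [lia | exact: Hall].
  + exists y; split => //; first by rewrite inE eqxx.
    move=> w; rewrite inE => /orP [/eqP -> | Hw] Pw //.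
    have := hasPn Hn w Hw; rewrite Pw /= -leqNgt //.
- have [m [Hm Pm Hxm Hall]] := IH x Hx Hp.
  case: (boolP (p y && (m < y))) => [/andP [Py Hmy] | Hn].
  + exists y; split => //; first by rewrite inE eqxx.
    * lia.
    * move=> w; rewrite inE => /orP [/eqP -> | Hw] Pw //. have := Hall w Hw Pw; lia.
  + exists m; split => //; first by rewrite inE Hm orbT.
    move=> w; rewrite inE => /orP [/eqP -> | Hw] Pw; last exact: Hall.
    move: Hn; rewrite Pw /= -leqNgt //.
Qed.


Lemma rk_ge1 s X x : x \in X -> 0 < rk s X x.
Proof. by move=> Hx; rewrite /rk -has_count; apply/hasP; exists x; rewrite ?eqxx ?leqnn. Qed.

Lemma rk_le s X x : 0 < s -> uniq X -> rk s X x <= (x %/ s).+1 * s - x.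
Proof.
move=> Hs Hu; rewrite /rk -size_filter.
rewrite -[X in _ <= X](size_iota x).
apply: uniq_leq_size; first exact: filter_uniq.
move=> z; rewrite mem_filter mem_iota => /andP [/andP [/eqP Hz Hxz] _].
have := ltn_ceil z Hs; rewrite Hz; lia.
Qed.

Lemma rk_viol s X y : 0 < s -> uniq X -> y.+1 \notin X -> y.+1 < (y %/ s).+1 * s ->
  rk s X y <= (y %/ s).+1 * s - y.+1.
Proof.
move=> Hs Hu Hy1 HL; rewrite /rk -size_filter.
have -> : (y %/ s).+1 * s - y.+1 = size (y :: iota y.+2 ((y %/ s).+1 * s - y.+2)).
  rewrite /= size_iota; lia.
apply: uniq_leq_size; first exact: filter_uniq.
move=> z; rewrite mem_filter inE mem_iota => /andP [/andP [/eqP Hz Hxz] Hzx].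
have := ltn_ceil z Hs; rewrite Hz => Hzl.
case: (ltngtP z y.+1) => Hc.
- lia.
- apply/orP; right; lia.
- by subst z; rewrite Hzx in Hy1.
Qed.

Lemma rk_strict s X x x' : x \in X -> x %/ s = x' %/ s -> x < x' -> rk s X x' < rk s X x.
Proof.
move=> Hx Hl Hxx'; rewrite /rk; apply: (count_strict (w := x)) => //.
- move=> z /andP [/eqP Hz H]; rewrite Hz Hl eqxx /=; lia.
- by rewrite eqxx leqnn.
- rewrite -Hl eqxx /= -ltnNge //.
Qed.

Lemma phi_ge s X x : 0 < s -> uniq X -> x <= phi s X x.
Proof. move=> Hs Hu; rewrite /phi; have := rk_le x Hs Hu; have := ltn_ceil x Hs; lia. Qed.

Lemma phi_lev s X x : 0 < s -> uniq X -> x \in X -> phi s X x %/ s = x %/ s.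
Proof.
move=> Hs Hu Hx; apply: lev_eq => //.
- apply: leq_trans (leq_divM x s) (phi_ge _ Hs Hu).
- rewrite /phi; have := rk_ge1 s Hx; have := ltn_ceil x Hs; lia.
Qed.

Lemma phi_inj s X : 0 < s -> uniq X -> {in X &, injective (phi s X)}.
Proof.
move=> Hs Hu x x' Hx Hx' E.
have Hl : x %/ s = x' %/ s by rewrite -(phi_lev Hs Hu Hx) -(phi_lev Hs Hu Hx') E.
have Hr : rk s X x = rk s X x'.
  move: E; rewrite /phi Hl; have := rk_le x Hs Hu; have := rk_le x' Hs Hu;
  have := ltn_ceil x Hs; have := ltn_ceil x' Hs; rewrite Hl; lia.
case: (ltngtP x x') => // H.
- have := rk_strict Hx Hl H; lia.
- have := rk_strict Hx' (esym Hl) H; lia.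
Qed.

Lemma cnt_step s X x : 0 < s -> PP s X -> (forall z, z \in X -> 0 < z) -> uniq X ->
  x \in X -> 0 < x %/ s -> rk s X x + 2 <= count (fun z => z %/ s == (x %/ s).-1) X.
Proof.
move=> Hs HP Hpos Hu Hx Hk.
have [m [Hm Pm Hxm Hall]] := @exists_max (fun z => z %/ s == x %/ s) X x Hx (eqxx _).
move: Pm => /eqP Pm.
set k := x %/ s in Pm Hk Hall *.
case Ek : k Hk => [//|k'] _.
have E1 : k'.+1 * s.+2 = k'.+1 * s + 2 * k'.+1 by rewrite !mulnS; lia.
have E2 : k'.+1 * s = s + k' * s by rewrite mulSn.
have E3 : k'.+2 * s = s + k'.+1 * s by rewrite mulSn.
have Hlv : forall z, z \in X -> z %/ s = k -> k'.+1 * s.+2 < z /\ z < k'.+2 * s.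
  move=> z Hz Hzl; have := inB Hs HP Hpos Hz; have := ltn_ceil z Hs; rewrite Hzl Ek; lia.
have Hlev : forall w, k' * s <= w -> w < k'.+1 * s -> w %/ s == k'.
  by move=> w H1 H2; rewrite (lev_eq Hs H1 H2).
set S := filter (fun z => (z %/ s == k) && (x <= z)) X.
set T := map (fun z => z - s.+2) S ++ [:: m - s.+1; m - s].
have HS : forall z, z \in S -> [/\ z \in X, z %/ s = k & x <= z].
  by move=> z; rewrite mem_filter => /andP [/andP [/eqP H1 H2] H3].
have [Hm1 Hm2] := Hlv m Hm Pm.
have Hsize : size T = rk s X x + 2 by rewrite size_cat size_map /= size_filter /rk addn2.
rewrite -Hsize -size_filter; apply: uniq_leq_size.
- rewrite cat_uniq; apply/and3P; split.
  + rewrite map_inj_in_uniq; first exact: filter_uniq.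
    move=> z z' Hz Hz'; have [Hz1 Hz2 _] := HS z Hz; have [Hz1' Hz2' _] := HS z' Hz'.
    have := Hlv z Hz1 Hz2; have := Hlv z' Hz1' Hz2'; lia.
  + apply/hasPn => w; rewrite !inE => /orP [] /eqP -> ; apply/mapP => [[z Hz E]];
    have [Hz1 Hz2 _] := HS z Hz; have := Hall z Hz1 (introT eqP Hz2); have := Hlv z Hz1 Hz2; lia.
  + rewrite /= inE andbT; lia.
- move=> w; rewrite mem_cat !inE mem_filter => /orP [/mapP [z Hz ->] | /orP [] /eqP ->].
  + have [Hz1 Hz2 _] := HS z Hz; have [H1 H2] := Hlv z Hz1 Hz2.
    have Hin : s.+2 \in [:: s; s.+1; s.+2] by rewrite !inE eqxx ?orbT.
    have [_ Hlt] := HP z s.+2 Hz1 Hin.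
    rewrite Hlt; last lia. rewrite andbT /=; apply: Hlev; lia.
  + have Hin : s.+1 \in [:: s; s.+1; s.+2] by rewrite !inE eqxx ?orbT.
    have [_ Hlt] := HP m s.+1 Hm Hin.
    rewrite Hlt; last lia. rewrite andbT /=; apply: Hlev; lia.
  + have Hin : s \in [:: s; s.+1; s.+2] by rewrite !inE eqxx ?orbT.
    have [_ Hlt] := HP m s Hm Hin.
    rewrite Hlt; last lia. rewrite andbT /=; apply: Hlev; lia.
Qed.

Lemma rank_surj s X k t : 0 < s -> uniq X -> 0 < t -> t <= count (fun z => z %/ s == k) X ->
  exists2 x', x' \in X & x' %/ s = k /\ rk s X x' = t.
Proof.
move=> Hs Hu Ht Htc.
set F := filter (fun z => z %/ s == k) X.
set R := map (rk s X) F.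
have HuR : uniq R.
  rewrite map_inj_in_uniq; first exact: filter_uniq.
  move=> z z'; rewrite !mem_filter => /andP [/eqP Hz Hz1] /andP [/eqP Hz' Hz1'] E.
  have Hl : z %/ s = z' %/ s by rewrite Hz Hz'.
  case: (ltngtP z z') => // H.
  - have := rk_strict Hz1 Hl H; lia.
  - have := rk_strict Hz1' (esym Hl) H; lia.
have Hsub : {subset R <= iota 1 (count (fun z => z %/ s == k) X)}.
  move=> r /mapP [z]; rewrite mem_filter => /andP [/eqP Hz Hz1] ->.
  rewrite mem_iota rk_ge1 //=.
  have : rk s X z <= count (fun z => z %/ s == k) X.
    apply: sub_count => w /andP [/eqP H _]; by rewrite H Hz.
  lia.
have Hsz : size (iota 1 (count (fun z => z %/ s == k) X)) <= size R.
  by rewrite size_iota size_map size_filter.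
have [_ HE] := uniq_min_size HuR Hsub Hsz.
have : t \in R by rewrite HE mem_iota; lia.
move=> /mapP [z]; rewrite mem_filter => /andP [/eqP Hz Hz1] ->.
by exists z.
Qed.

Lemma PP_phi s X : 0 < s -> PP s X -> (forall z, z \in X -> 0 < z) -> uniq X ->
  PP s (map (phi s X) X).
Proof.
move=> Hs HP Hpos Hu z a /mapP [x Hx ->] Ha.
have Hge := phi_ge x Hs Hu.
have Hr1 := rk_ge1 s Hx.
have HB := inB Hs HP Hpos Hx.
have Hc := ltn_ceil x Hs.
have Hsa : s <= a <= s.+2 by move: Ha; rewrite !inE; lia.
move: Hge HB Hc; rewrite /phi.
case Ek : (x %/ s) => [|k'] Hge HB Hc.
- split; first lia. lia.
- have E1 : k'.+1 * s.+2 = k'.+1 * s + 2 * k'.+1 by rewrite !mulnS; lia.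
  have E3 : k'.+2 * s = s + k'.+1 * s by rewrite mulSn.
  split; first lia.
  move=> Hax.
  have Hk0 : 0 < x %/ s by rewrite Ek.
  have Hcs := cnt_step Hs HP Hpos Hu Hx Hk0.
  rewrite Ek /= in Hcs.
  have [x' Hx' [Hl' Hr']] := @rank_surj s X k' (rk s X x + (a - s)) Hs Hu ltac:(lia) ltac:(lia).
  apply/mapP; exists x' => //; rewrite /phi Hl' Hr'; lia.
Qed.

Lemma sum_le (f : nat -> nat) (X : seq nat) :
  (forall x, x \in X -> x <= f x) -> sumn X <= sumn (map f X).
Proof.
elim: X => //= z X IH Hf.
have := Hf z; rewrite inE eqxx => /(_ erefl) Hz.
have := IH (fun x (Hx : x \in X) => Hf x ltac:(by rewrite inE Hx orbT)). lia.
Qed.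

Lemma sum_strict (f : nat -> nat) (X : seq nat) y :
  (forall x, x \in X -> x <= f x) -> y \in X -> y < f y -> sumn X < sumn (map f X).
Proof.
elim: X => //= z X IH Hf; rewrite inE => /orP [/eqP -> | Hy] Hlt.
- have := sum_le (fun x (Hx : x \in X) => Hf x ltac:(by rewrite inE Hx orbT)). lia.
- have := IH (fun x (Hx : x \in X) => Hf x ltac:(by rewrite inE Hx orbT)) Hy Hlt.
  have := Hf z; rewrite inE eqxx => /(_ erefl). lia.
Qed.

Lemma find_gap (X : seq nat) i j : i \in X -> j \notin X -> i <= j ->
  exists y, [/\ i <= y, y < j, y \in X & y.+1 \notin X].
Proof.
move=> Hi Hj Hij.
move Ed : (j - i) => d; elim: d i Ed Hi Hij => [|d IH] i Ed Hi Hij.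
- have E : i = j by lia.
  by subst; rewrite Hi in Hj.
- case: (boolP (i.+1 \in X)) => H.
  + have [y [H1 H2 H3 H4]] := IH i.+1 ltac:(lia) H ltac:(lia).
    exists y; split => //; lia.
  + exists i; split => //; lia.
Qed.

Unset Implicit Arguments.
Theorem lemma3p1 (s : nat) (la : seq nat) :
  3 <= s ->
  is_core3 s la ->
  (forall mu : seq nat, is_core3 s mu -> psize mu <= psize la) ->
  forall (k i : nat),
    k <= s./2 - 1 ->
    1 + k * (s + 2) <= i <= (k + 1) * s - 1 ->
    i \in beta la ->
    forall j : nat, i <= j <= (k + 1) * s - 1 -> j \in beta la.
Proof.
move=> Hs3 Hcore Hmax k i Hk /andP [Hi1 Hi2] Hi j /andP [Hj1 Hj2].
case: (boolP (j \in beta la)) => // Hj; exfalso.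
have Hs : 0 < s by lia.
have Hp : is_partition la by case: Hcore.
have HP : PP s (beta la) := core_PP Hs Hcore.
have Hpos : forall z, z \in beta la -> 0 < z.
  move=> z /(mem_betaP _ Hp) [t Ht <-]; rewrite /xb; have := part_pos Hp Ht; lia.
have Hu : uniq (beta la).
  rewrite beta_xb // map_inj_in_uniq ?iota_uniq //.
  move=> t t'; rewrite !mem_iota /= !add0n => Ht Ht' E.
  case: (ltngtP t t') => // H.
  - have := part_mono Hp (ltnW H) Ht'; move: E; rewrite /xb; lia.
  - have := part_mono Hp (ltnW H) Ht; move: E; rewrite /xb; lia.
have [y [Hy1 Hy2 Hy Hy']] := find_gap Hi Hj Hj1.
have E1 : k * (s + 2) = k * s + 2 * k by lia.
have E2 : (k + 1) * s = k * s + s by lia.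
have E3 : k.+1 * s = k * s + s by lia.
have Hly : y %/ s = k by apply: lev_eq => //; lia.
have Hviol : y < phi s (beta la) y.
  have HL : y.+1 < (y %/ s).+1 * s by rewrite Hly; lia.
  have := rk_viol Hs Hu Hy' HL; rewrite /phi Hly. lia.
set Xs := map (phi s (beta la)) (beta la).
set xs := sort geq Xs.
have HuXs : uniq Xs by rewrite map_inj_in_uniq //; exact: phi_inj.
have Hsort : sorted gtn xs.
  rewrite gtn_sorted_uniq_geq sort_uniq HuXs /=; apply: sort_sorted.
  by move=> a b; apply: leq_total.
have Hall : all (fun z => 0 < z) xs.
  apply/allP => z; rewrite mem_sort => /mapP [x Hx ->].
  have := phi_ge x Hs Hu; have := Hpos x Hx; lia.
set mu := mkpart xs.
have Hmp : is_partition mu := mkpart_part Hsort Hall.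
have Hbm : beta mu = xs := beta_mkpart Hsort Hall.
have Hcm : is_core3 s mu.
  apply: PP_core Hmp _; rewrite Hbm.
  apply: (@PP_eqi s Xs); first by move=> z; rewrite mem_sort.
  exact: PP_phi.
have Hle := Hmax mu Hcm.
have Hsz : size mu = size la.
  by rewrite mkpart_size size_sort size_map /beta size_map size_iota.
have Sm := sum_beta Hmp; have Sl := sum_beta Hp.
rewrite Hbm Hsz in Sm.
have Hsxs : sumn xs = sumn Xs by apply: perm_sumn; rewrite perm_sort perm_refl.
have Hlt : sumn (beta la) < sumn Xs.
  apply: (sum_strict (y := y)) => // x _; exact: phi_ge.
lia.
Qed.
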